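(* Let $M=(E,\mathcal{I})$ be a matroid with $\sigma(M)=\lambda(M)=k$. Then any two distinct cocircuits of $M$ of size $k$ are disjoint. In particular, if $G$ is a connected graph (multiple edges allowed) with $\lambda(G)=\sigma(G)=k$, then any two distinct minimal edge cuts of $G$ having exactly $k$ edges have no edge in common.
   Context: For a matroid $M$, $\sigma(M)$ is the maximum number of pairwise disjoint bases and $\lambda(M)$ (the cogirth) is the minimum size of a cocircuit (a minimal set meeting every base). For a connected graph $G$, $\lambda(G)$ is the edge connectivity (the least number of edges whose removal disconnects $G$) and $\sigma(G)$ is the maximum number of pairwise edge-disjoint spanning trees of $G$; these are the cogirth and base packing number of the cycle matroid of $G$, whose cocircuits are the minimal edge cuts. *)

(* Defs.v *)
From mathcomp Require Import all_boot.
Set Implicit Arguments. Unset Strict Implicit. Unset Printing Implicit Defensive.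

Record matroid (E : finType) := Matroid {
  indep : {set E} -> bool;
  indep0 : indep set0;
  indep_sub : forall A B : {set E}, A \subset B -> indep B -> indep A;
  indep_aug : forall A B : {set E}, indep A -> indep B -> #|A| < #|B| ->
                exists2 x, x \in B :\: A & indep (x |: A)
}.

Section MatroidDefs.
Variables (E : finType) (M : matroid E).

Definition is_base (B : {set E}) : bool := maxset (indep M) B.

Definition meets_all_bases (C : {set E}) : bool :=
  [forall B : {set E}, is_base B ==> (C :&: B != set0)].

Definition is_cocircuit (C : {set E}) : bool := minset meets_all_bases C.

Definition has_disjoint_bases (n : nat) : Prop :=
  exists F : 'I_n -> {set E},
    (forall i, is_base (F i)) /\
    (forall i j, i != j -> [disjoint F i & F j]).

Definition sigma_eq (k : nat) : Prop :=
  has_disjoint_bases k /\ ~ has_disjoint_bases k.+1.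

Definition lambda_eq (k : nat) : Prop :=
  (exists C, is_cocircuit C /\ #|C| = k) /\
  (forall C, is_cocircuit C -> k <= #|C|).
End MatroidDefs.

Section GraphDefs.
Variables (V E : finType) (ends : E -> V * V).

Definition adj (F : {set E}) : rel V :=
  fun x y => [exists e in F, (ends e == (x, y)) || (ends e == (y, x))].

Definition connected_on (F : {set E}) : bool :=
  [forall x, forall y, connect (adj F) x y].

Definition graph_connected : bool := connected_on setT.

Definition is_spanning_tree (F : {set E}) : bool := minset connected_on F.

Definition is_edge_cut (C : {set E}) : bool := ~~ connected_on (~: C).

Definition is_min_edge_cut (C : {set E}) : bool := minset is_edge_cut C.

Definition has_disjoint_trees (n : nat) : Prop :=
  exists F : 'I_n -> {set E},
    (forall i, is_spanning_tree (F i)) /\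
    (forall i j, i != j -> [disjoint F i & F j]).

Definition graph_sigma_eq (k : nat) : Prop :=
  has_disjoint_trees k /\ ~ has_disjoint_trees k.+1.

Definition graph_lambda_eq (k : nat) : Prop :=
  (exists C, is_edge_cut C /\ #|C| = k) /\
  (forall C, is_edge_cut C -> k <= #|C|).
End GraphDefs.

(* Main.v *)
Require Import Defs.
From mathcomp Require Import all_boot.
Set Implicit Arguments. Unset Strict Implicit. Unset Printing Implicit Defensive.

Lemma disj_eq (T : finType) k (F : 'I_k -> {set T}) :
  (forall i j, i != j -> [disjoint F i & F j]) ->
  forall i j x, x \in F i -> x \in F j -> i = j.
Proof.
move=> H i j x xi xj; case: (eqVneq i j) => // /H /disjointFr Hd.
by rewrite (Hd x xi) in xj.
Qed.

Lemma unique_meet (T : finType) k (F : 'I_k -> {set T}) (C : {set T}) :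
  (forall i j, i != j -> [disjoint F i & F j]) ->
  (forall i, C :&: F i != set0) -> #|C| = k ->
  forall x, x \in C ->
    (exists i, x \in F i) /\ (forall i, x \in F i -> C :&: F i = [set x]).
Proof.
move=> Hd Hm Hc x xC.
pose f i := odflt x [pick y in C :&: F i].
have fP i : f i \in C :&: F i.
  rewrite /f; case: pickP => //= H0.
  by move: (Hm i); case/set0Pn => y; rewrite H0.
have finj : injective f.
  move=> i j eij; apply: (disj_eq Hd (x := f i)).
  - by move: (fP i); rewrite inE => /andP[].
  - by rewrite eij; move: (fP j); rewrite inE => /andP[].
have sub : f @: setT \subset C.
  by apply/subsetP => y /imsetP[i _ ->]; move: (fP i); rewrite inE => /andP[].
have eqC : f @: setT = C.
  apply/eqP; rewrite eqEcard sub /= card_imset // cardsT card_ord Hc //.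
have Hall : forall y, y \in C -> exists i, y = f i.
  by move=> y; rewrite -eqC => /imsetP[i _ ->]; exists i.
have [i0 xi0] := Hall x xC.
have xF : x \in F i0 by rewrite xi0; move: (fP i0); rewrite inE => /andP[].
split; first by exists i0.
move=> i xi; have ei : i0 = i by apply: (disj_eq Hd xF xi).
subst i.
apply/setP => y; rewrite in_set1; apply/idP/eqP; last first.
  by move=> ->; rewrite inE xC xF.
rewrite inE => /andP[yC yF]; have [j yj] := Hall y yC.
have yFj : y \in F j by rewrite yj; move: (fP j); rewrite inE => /andP[].
by rewrite (disj_eq Hd yFj yF) in yj; rewrite yj -xi0.
Qed.

Section Mat.
Variables (E : finType) (M : matroid E).

Lemma base_card_le (A B : {set E}) : is_base M A -> is_base M B -> #|B| <= #|A|.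
Proof.
move=> /maxsetP[iA mA] /maxsetP[iB mB]; rewrite leqNgt; apply/negP => lt.
have [x /setDP[xB xA] ix] := indep_aug iA iB lt.
have := mA _ ix (subsetUr _ _) => Hx.
by move: xA; rewrite -Hx setU11.
Qed.

Lemma base_card (A B : {set E}) : is_base M A -> is_base M B -> #|A| = #|B|.
Proof. by move=> hA hB; apply/eqP; rewrite eqn_leq !base_card_le. Qed.

Lemma base_of_card (I B : {set E}) : indep M I -> is_base M B -> #|I| = #|B| ->
  is_base M I.
Proof.
move=> iI bB cI.
have [B2 bB2 sub] := maxset_exists iI.
suff -> : I = B2 by [].
apply/eqP; rewrite eqEcard sub /= (base_card bB2 bB) cI //.
Qed.

Lemma cocirc_meets (C B : {set E}) : is_cocircuit M C -> is_base M B ->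
  C :&: B != set0.
Proof. by move=> /minsetP[/forallP H _] bB; exact: (implyP (H B) bB). Qed.

Lemma fund_sub (B C D : {set E}) e : is_base M B -> is_cocircuit M C ->
  is_cocircuit M D -> C :&: B = [set e] -> D :&: B = [set e] -> C \subset D.
Proof.
move=> bB cC cD CB DB; apply/subsetP => x xC.
have eB : e \in B by have := set11 e; rewrite -CB inE => /andP[].
have eD : e \in D by have := set11 e; rewrite -DB inE => /andP[].
case: (eqVneq x e) => [-> // | xe].
have notm : ~~ meets_all_bases M (C :\ x).
  apply/negP => Hm; move/minsetP: cC => [_ Hmin].
  have := Hmin _ Hm (subsetDl _ _) => Hx.
  by move: xC; rewrite -Hx !inE eqxx.
have [B' /andP[bB' /eqP H0]] : exists B', is_base M B' && ((C :\ x) :&: B' == set0).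
  move: notm; rewrite /meets_all_bases negb_forall => /existsP[B' HB'].
  by exists B'; move: HB'; rewrite negb_imply negbK.
have xB' : forall y, y \in C -> y \in B' -> y = x.
  move=> y yC yB'; apply/eqP; apply/negPn/negP => yx.
  have H1 : y \in (C :\ x) :&: B' by rewrite !inE yx yC yB'.
  by rewrite H0 inE in H1.
have iBe : indep M (B :\ e) by apply: (indep_sub (subsetDl _ _)); case/maxsetP: bB.
have cBe : #|B :\ e| < #|B'|.
  by rewrite -(base_card bB bB') (cardsD1 e B) eB.
have [y /setDP[yB' yBe] iy] := indep_aug iBe (proj1 (maxsetP bB')) cBe.
have by_ : is_base M (y |: (B :\ e)).
  apply: (base_of_card iy bB); rewrite cardsU1 yBe (cardsD1 e B) eB //.
have Bdisj : forall (X : {set E}) z, X :&: B = [set e] -> z \in X -> z \in B :\ e -> False.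
  move=> X z XB zX; rewrite !inE => /andP[ze zB].
  have H1 : z \in X :&: B by rewrite inE zX zB.
  by rewrite XB inE (negbTE ze) in H1.
have yC : y \in C.
  apply/negPn/negP => yC.
  have := cocirc_meets cC by_; case/set0Pn => z; rewrite !inE => /andP[zC].
  case/orP => [/eqP zy | zBe]; first by move: zC; rewrite zy (negbTE yC).
  by apply: (Bdisj C z CB zC); rewrite !inE.
have yx := xB' y yC yB'; subst y.
have := cocirc_meets cD by_; case/set0Pn => z; rewrite !inE => /andP[zD].
case/orP => [/eqP zx | zBe]; first by rewrite -zx.
by exfalso; apply: (Bdisj D z DB zD); rewrite !inE.
Qed.

Lemma fund_eq (B C D : {set E}) e : is_base M B -> is_cocircuit M C ->
  is_cocircuit M D -> C :&: B = [set e] -> D :&: B = [set e] -> C = D.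
Proof.
move=> bB cC cD CB DB; have sCD := fund_sub bB cC cD CB DB.
move/minsetP: (cD) => [_ Hmin]; apply: Hmin => //.
by case/minsetP: cC.
Qed.
End Mat.

Lemma closed_reach (T : finType) (r : rel T) (P : pred T) :
  (forall x y, P x -> r x y -> P y) -> forall x y, P x -> connect r x y -> P y.
Proof.
move=> H x y Px /connectP [p pth ->]; elim: p x Px pth => //= z p IH x Px.
by case/andP => rxz pz; exact: IH z (H _ _ Px rxz) pz.
Qed.

Lemma connect_symm (T : finType) (r : rel T) : (forall x y, r x y -> r y x) ->
  forall x y, connect r x y -> connect r y x.
Proof.
move=> Hs x y; apply: (closed_reach (P := fun z => connect r z x)) => //.
move=> a b Ha rab; apply: connect_trans Ha; apply: connect1; exact: Hs.
Qed.

Lemma connect_mono (T : finType) (r r' : rel T) : (forall x y, r x y -> r' x y) ->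
  forall x y, connect r x y -> connect r' x y.
Proof.
move=> Hs x y; apply: (closed_reach (P := fun z => connect r' x z)) => //.
move=> a b Ha rab; apply: connect_trans Ha _; apply: connect1; exact: Hs.
Qed.

Section Graph.
Variables (V E : finType) (ends : E -> V * V).

Lemma adj_sym F x y : adj ends F x y -> adj ends F y x.
Proof.
move=> /existsP[f /andP[fF H]]; apply/existsP; exists f; rewrite fF /=.
by rewrite orbC.
Qed.

Lemma adj_mono (F G : {set E}) x y : F \subset G -> adj ends F x y -> adj ends G x y.
Proof.
move=> sFG /existsP[f /andP[fF H]]; apply/existsP; exists f.
by rewrite (subsetP sFG _ fF).
Qed.

Lemma conn_mono (F G : {set E}) x y : F \subset G ->
  connect (adj ends F) x y -> connect (adj ends G) x y.
Proof. by move=> s; apply: connect_mono => a b; apply: adj_mono. Qed.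

Definition reach (F : {set E}) u := [set v | connect (adj ends F) u v].
Definition delta (S : {set V}) := [set f | ((ends f).1 \in S) != ((ends f).2 \in S)].

Lemma cut_delta (C : {set E}) u : is_min_edge_cut ends C -> C = delta (reach (~: C) u).
Proof.
move=> /minsetP[cC Hmin]; set S := reach (~: C) u.
have uS : u \in S by rewrite inE connect0.
have [v vS] : exists v, v \notin S.
  move: cC; rewrite /is_edge_cut /connected_on negb_forall => /existsP[a].
  rewrite negb_forall => /existsP[b nab].
  case: (boolP (a \in S)) => aS; last by exists a.
  case: (boolP (b \in S)) => bS; last by exists b.
  exfalso; move/negP: nab; apply; move: aS bS; rewrite !inE => ua ub.
  apply: connect_trans (connect_symm (@adj_sym _) ua) ub.
have sub : delta S \subset C.
  apply/subsetP => f; rewrite inE => Hf; apply/negPn/negP => fC.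
  have a12 : adj ends (~: C) (ends f).1 (ends f).2.
    by apply/existsP; exists f; rewrite inE fC -surjective_pairing eqxx.
  move: Hf; case: (boolP ((ends f).1 \in S)) => h1; case: (boolP ((ends f).2 \in S)) => h2 //= _.
  - by move: h1 h2; rewrite !inE => h1 /negP; apply; apply: connect_trans h1 (connect1 a12).
  - move: h1 h2; rewrite !inE => /negP h1 h2; apply: h1; apply: connect_trans h2 _.
    by apply: connect1; apply: adj_sym.
have cut : is_edge_cut ends (delta S).
  rewrite /is_edge_cut /connected_on; apply/negP => /forallP /(_ u) /forallP /(_ v) cuv.
  move/negP: vS; apply; apply: (closed_reach (P := fun z => z \in S)) cuv => //.
  move=> a b aS /existsP[f /andP[]]; rewrite !inE negbK => /eqP Hf /orP[] /eqP Ef;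
  rewrite Ef /= in Hf; [by rewrite -Hf; move: aS; rewrite inE | by rewrite Hf; move: aS; rewrite inE].
by apply/esym/Hmin.
Qed.

Lemma split_tree (T : {set E}) e : connected_on ends T -> forall v,
  connect (adj ends (T :\ e)) (ends e).1 v || connect (adj ends (T :\ e)) (ends e).2 v.
Proof.
move=> /forallP /(_ (ends e).1) /forallP Hc v; have := Hc v.
apply: (closed_reach (P := fun z => connect (adj ends (T :\ e)) (ends e).1 z ||
   connect (adj ends (T :\ e)) (ends e).2 z)); last by rewrite connect0.
move=> a b Ha /existsP[f /andP[fT Hf]].
case: (eqVneq f e) => [fe | fne].
  subst f; move: Hf => /orP[] /eqP ->; rewrite connect0 // orbT //.
have ab : adj ends (T :\ e) a b.
  by apply/existsP; exists f; rewrite !inE fne fT.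
by case/orP: Ha => H; [rewrite (connect_trans H (connect1 ab)) | rewrite (connect_trans H (connect1 ab)) orbT].
Qed.

Lemma reach_eq (C T : {set E}) e : is_edge_cut ends C -> connected_on ends T ->
  T :\ e \subset ~: C -> reach (~: C) (ends e).1 = reach (T :\ e) (ends e).1.
Proof.
move=> cC cT sT; apply/setP => v; rewrite !inE; apply/idP/idP; last first.
  exact: conn_mono.
move=> Hv; case/orP: (split_tree e cT v) => // Hw.
exfalso; move/negP: cC; apply; apply/forallP => a; apply/forallP => b.
have uw : connect (adj ends (~: C)) (ends e).1 (ends e).2.
  apply: connect_trans Hv _; apply: connect_symm; first exact: (@adj_sym _).
  exact: conn_mono Hw.
have Hall : forall z, connect (adj ends (~: C)) (ends e).1 z.
  move=> z; case/orP: (split_tree e cT z) => H; first exact: conn_mono H.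
  exact: connect_trans uw (conn_mono sT H).
exact: connect_trans (connect_symm (@adj_sym _) (Hall a)) (Hall b).
Qed.

Lemma cut_meets (C T : {set E}) : is_edge_cut ends C -> is_spanning_tree ends T ->
  C :&: T != set0.
Proof.
move=> cC /minsetP[cT _]; apply/negP => /eqP H0.
have sT : T \subset ~: C.
  apply/subsetP => f fT; rewrite inE; apply/negP => fC.
  have H1 : f \in C :&: T by rewrite inE fC fT.
  by rewrite H0 inE in H1.
move/negP: cC; apply; apply/forallP => a; apply/forallP => b.
apply: conn_mono sT _; move/forallP: cT => /(_ a) /forallP; exact.
Qed.

Lemma graph_fund (T C D : {set E}) e : is_spanning_tree ends T ->
  is_min_edge_cut ends C -> is_min_edge_cut ends D ->
  C :&: T = [set e] -> D :&: T = [set e] -> C = D.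
Proof.
move=> tT mC mD CT DT.
have cT : connected_on ends T by case/minsetP: tT.
have sub : forall X : {set E}, X :&: T = [set e] -> T :\ e \subset ~: X.
  move=> X XT; apply/subsetP => f; rewrite !inE => /andP[fe fT]; apply/negP => fX.
  have H1 : f \in X :&: T by rewrite inE fX fT.
  by rewrite XT inE (negbTE fe) in H1.
rewrite (cut_delta (ends e).1 mC) (cut_delta (ends e).1 mD).
rewrite (reach_eq _ cT (sub _ CT)); last by case/minsetP: mC.
by rewrite (reach_eq _ cT (sub _ DT)) //; case/minsetP: mD.
Qed.
End Graph.

Theorem mainTheorem2 :
  (forall (E : finType) (M : matroid E) (k : nat),
     sigma_eq M k -> lambda_eq M k ->
     forall C D : {set E},
       is_cocircuit M C -> is_cocircuit M D -> #|C| = k -> #|D| = k ->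
       C != D -> [disjoint C & D])
  /\
  (forall (V E : finType) (ends : E -> V * V) (k : nat),
     graph_connected ends -> graph_lambda_eq ends k -> graph_sigma_eq ends k ->
     forall C D : {set E},
       is_min_edge_cut ends C -> is_min_edge_cut ends D ->
       #|C| = k -> #|D| = k -> C != D -> [disjoint C & D]).
Proof.
split.
  move=> E M k [[F [bF dF]] _] _ C D cC cD kC kD CD.
  rewrite -setI_eq0; apply/negPn/negP => /set0Pn[x]; rewrite inE => /andP[xC xD].
  have [[i xi] HC] := unique_meet dF (fun i => cocirc_meets cC (bF i)) kC xC.
  have [_ HD] := unique_meet dF (fun i => cocirc_meets cD (bF i)) kD xD.
  by move/eqP: CD; apply; apply: (fund_eq (bF i) cC cD (HC i xi) (HD i xi)).
move=> V E ends k _ _ [[F [bF dF]] _] C D cC cD kC kD CD.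
rewrite -setI_eq0; apply/negPn/negP => /set0Pn[x]; rewrite inE => /andP[xC xD].
have ecC : is_edge_cut ends C by case/minsetP: cC.
have ecD : is_edge_cut ends D by case/minsetP: cD.
have [[i xi] HC] := unique_meet dF (fun i => cut_meets ecC (bF i)) kC xC.
have [_ HD] := unique_meet dF (fun i => cut_meets ecD (bF i)) kD xD.
by move/eqP: CD; apply; apply: (graph_fund (bF i) cC cD (HC i xi) (HD i xi)).
Qed.
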